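(* Let $\arctan$ be the principal branch of the inverse tangent with $\arctan0=0$. For $|z-1|<1$, \[ \frac{\arctan z-\frac{\pi}{4}}{z}=\sum_{n=1}^{\infty}(-1)^nT(n)(z-1)^n, \] where $T(n)=\sum_{k=1}^{n}\frac{(-1)^k}{2^{k/2}k}\sin\frac{3k\pi}{4}$ for $n\ge1$. *)

(* Defs.v *)
From Stdlib Require Import Reals.
From Coquelicot Require Import Coquelicot.
Open Scope R_scope.

(* Principal argument of a complex number w = (x, y), valued in (-PI, PI],
   with the convention Arg 0 = 0. *)
Definition Arg (w : C) : R :=
  let x := fst w in let y := snd w in
  if Rlt_dec 0 x then atan (y / x)
  else if Rlt_dec x 0 then
    (if Rle_dec 0 y then atan (y / x) + PI else atan (y / x) - PI)
  else
    if Rlt_dec 0 y then PI / 2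
    else if Rlt_dec y 0 then - (PI / 2) else 0.

Definition Clog (w : C) : C := (ln (Cmod w), Arg w).

(* Principal branch of the complex inverse tangent:
   arctan z = (i/2) (Log(1 - i z) - Log(1 + i z)),
   analytic off the cuts {i y : |y| >= 1}, with arctan 0 = 0. *)
Definition Carctan (z : C) : C :=
  Ci / 2 * (Clog (1 - Ci * z) - Clog (1 + Ci * z)).

Definition T (n : nat) : R :=
  sum_n_m (fun k : nat =>
    (-1) ^ k / (Rpower 2 (INR k / 2) * INR k) * sin (3 * INR k * PI / 4)) 1 n.

(* Main.v *)
Require Import Defs.
From Stdlib Require Import Reals Lra Lia.
From Coquelicot Require Import Coquelicot.
Open Scope R_scope.

Definition q : C := (-1/2, 1/2).

Lemma sqrt2_pos : 0 < sqrt 2.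
Proof. apply sqrt_lt_R0; lra. Qed.

Lemma q_pow (k : nat) :
  (q ^ k)%C = (cos (3 * INR k * PI / 4) / sqrt 2 ^ k, sin (3 * INR k * PI / 4) / sqrt 2 ^ k).
Proof.
  induction k as [|k IH].
  - simpl. replace (3 * 0 * PI / 4) with 0 by field. rewrite cos_0, sin_0.
    apply injective_projections; simpl; unfold Rdiv; rewrite ?Rinv_1; ring.
  - change (q ^ S k)%C with (q * q ^ k)%C. rewrite IH.
    replace (3 * INR (S k) * PI / 4) with (3 * INR k * PI / 4 + 3 * (PI / 4))
      by (rewrite S_INR; field).
    rewrite cos_plus, sin_plus, cos_3PI4, sin_3PI4.
    assert (H2 := sqrt2_pos).
    assert (Hs : sqrt 2 * sqrt 2 = 2) by (apply sqrt_sqrt; lra).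
    assert (Hk : sqrt 2 ^ k <> 0) by (apply pow_nonzero; lra).
    unfold q; apply injective_projections; simpl;
      assert (Hq : sqrt 2 <> 0) by lra; set (c := cos _); set (s := sin _); set (p := sqrt 2 ^ k); field_simplify; try (split; assumption); try assumption; replace (sqrt 2 ^ 2) with 2 by (simpl; lra); field; assumption.
Qed.

Lemma Rpower_half (k : nat) : Rpower 2 (INR k / 2) = sqrt 2 ^ k.
Proof.
  replace (INR k / 2) with (/2 * INR k) by field.
  rewrite <- Rpower_mult, Rpower_sqrt by lra.
  apply Rpower_pow, sqrt2_pos.
Qed.

Definition bb (n : nat) : R := snd (q ^ S n)%C / INR (S n).
Definition aa (n : nat) : R := (-1) ^ n * T n.

Lemma term_eq (k : nat) :
  (-1) ^ k / (Rpower 2 (INR k / 2) * INR k) * sin (3 * INR k * PI / 4)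
  = (-1) ^ k * (snd (q ^ k)%C / INR k).
Proof.
  rewrite Rpower_half, q_pow. simpl. unfold Rdiv. rewrite Rinv_mult. ring.
Qed.

Lemma T0 : T 0 = 0.
Proof. unfold T. rewrite sum_n_m_zero by lia. reflexivity. Qed.

Lemma TS (n : nat) : T (S n) = T n + (-1) ^ (S n) * bb n.
Proof.
  unfold T at 1. rewrite sum_n_Sm by lia. unfold T, bb.
  rewrite term_eq. reflexivity.
Qed.

Lemma m1sq (n : nat) : (-1) ^ n * (-1) ^ n = 1.
Proof. induction n; simpl; [ring | ]. replace (-1 * (-1) ^ n * (-1 * (-1) ^ n)) with ((-1) ^ n * (-1) ^ n) by ring. exact IHn. Qed.

Lemma aS (n : nat) : aa (S n) = bb n - aa n.
Proof.
  unfold aa. rewrite TS. rewrite Rmult_plus_distr_l, <- Rmult_assoc, m1sq. simpl. ring.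
Qed.

Lemma a0 : aa 0 = 0.
Proof. unfold aa. rewrite T0. ring. Qed.

Definition r : R := Cmod q.

Lemma r_sq : r * r = /2.
Proof.
  assert (H : Cmod q ^ 2 = /2).
  { rewrite Cmod2_alt. unfold q, Re, Im; simpl. field. }
  unfold r. simpl in H. lra.
Qed.

Lemma r_bounds : 0 < r < 1.
Proof.
  assert (H := r_sq). assert (0 <= r) by (unfold r; apply Cmod_ge_0).
  split; nra.
Qed.

Lemma bb_bound (n : nat) : Rabs (bb n) <= r ^ S n.
Proof.
  unfold bb, r. rewrite <- Cmod_pow.
  assert (H1 : Rabs (snd (q ^ S n)%C) <= Cmod (q ^ S n)%C).
  { eapply Rle_trans; [ | apply Rmax_Cmod]. apply Rmax_r. }
  assert (H2 : 1 <= INR (S n)) by (rewrite S_INR; pose proof (pos_INR n); lra).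
  unfold Rdiv. rewrite Rabs_mult, Rabs_inv, (Rabs_right (INR (S n))) by lra.
  assert (0 < / INR (S n) <= 1).
  { split. apply Rinv_0_lt_compat; lra. rewrite <- Rinv_1. apply Rinv_le_contravar; lra. }
  assert (0 <= Rabs (snd (q ^ S n)%C)) by apply Rabs_pos.
  nra.
Qed.

Lemma aa_bound (n : nat) : Rabs (aa n) <= 1 / (1 - r).
Proof.
  pose proof r_bounds as Hr.
  assert (H : Rabs (aa n) <= (r - r ^ S n) / (1 - r)).
  { induction n.
    - rewrite a0, Rabs_R0. simpl. replace (r - r * 1) with 0 by ring. unfold Rdiv; rewrite Rmult_0_l; lra.
    - rewrite aS. eapply Rle_trans. apply Rabs_triang. rewrite Rabs_Ropp.
      pose proof (bb_bound n).
      apply Rle_trans with (r ^ S n + (r - r ^ S n) / (1 - r)); [lra | ].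
      right. simpl. field. lra. }
  eapply Rle_trans; [exact H|]. apply Rmult_le_compat_r.
  - left; apply Rinv_0_lt_compat; lra.
  - pose proof (pow_lt r (S n) (proj1 Hr)). lra.
Qed.

Definition Gs (w : C) (N : nat) (t : R) : C :=
  sum_n (fun n => (RtoC (bb n * t ^ S n) * w ^ S n)%C) N.
Definition Ps (w : C) (M : nat) : C :=
  sum_n (fun m => (RtoC (aa (S m)) * w ^ S m)%C) M.

Lemma P_rel (w : C) (M : nat) :
  ((1 + w) * Ps w M = Gs w M 1 + RtoC (aa (S M)) * w ^ S (S M))%C.
Proof.
  unfold Ps, Gs. induction M.
  - rewrite !sum_O. rewrite aS, a0, pow1.
    replace (bb 0 * 1) with (bb 0) by ring. replace (bb 0 - 0) with (bb 0) by ring.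
    simpl. ring.
  - rewrite !sum_Sn. change plus with Cplus.
    set (A := sum_n (fun m : nat => (RtoC (aa (S m)) * w ^ S m)%C) M) in *.
    set (B := sum_n (fun n : nat => (RtoC (bb n * 1 ^ S n) * w ^ S n)%C) M) in *.
    rewrite pow1, Rmult_1_r.
    replace (bb (S M)) with (aa (S (S M)) + aa (S M)) by (rewrite (aS (S M)); ring).
    rewrite RtoC_plus.
    replace (((1 + w) * (A + RtoC (aa (S (S M))) * w ^ S (S M))))%C
      with ((1 + w) * A + (1 + w) * RtoC (aa (S (S M))) * w ^ S (S M))%C by ring.
    rewrite IHM. simpl. ring.
Qed.

Lemma RtoC_pow (t : R) (n : nat) : RtoC (t ^ n) = (RtoC t ^ n)%C.
Proof. induction n; simpl; [reflexivity|]. rewrite <- IHn, RtoC_mult. reflexivity. Qed.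

Lemma fst_sum_n (f : nat -> C) (N : nat) :
  fst (sum_n f N) = sum_n (fun n => fst (f n)) N.
Proof.
  induction N; [rewrite !sum_O; reflexivity|].
  rewrite !sum_Sn, <- IHN. reflexivity.
Qed.

Lemma snd_sum_n (f : nat -> C) (N : nat) :
  snd (sum_n f N) = sum_n (fun n => snd (f n)) N.
Proof.
  induction N; [rewrite !sum_O; reflexivity|].
  rewrite !sum_Sn, <- IHN. reflexivity.
Qed.

Lemma deriv_poly (al : nat -> R) (N : nat) (t : R) :
  is_derive (fun t => sum_n (fun n => al n * t ^ S n) N) t
            (sum_n (fun n => al n * INR (S n) * t ^ n) N).
Proof.
  induction N.
  - apply (is_derive_ext (fun t => al 0%nat * t ^ 1)).
    { intros s. rewrite sum_O. reflexivity. }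
    rewrite sum_O.
    replace (al 0%nat * INR 1 * t ^ 0) with (al 0%nat * (INR 1 * 1 * t ^ Init.Nat.pred 1)) by (simpl; ring).
    apply is_derive_scal. apply is_derive_pow. exact (is_derive_id (K:=R_AbsRing) t).
  - apply (is_derive_ext (fun t => plus (sum_n (fun n => al n * t ^ S n) N) (al (S N) * t ^ S (S N)))).
    { intros s. rewrite sum_Sn. reflexivity. }
    rewrite sum_Sn. apply (@is_derive_plus R_AbsRing R_NormedModule); [exact IHN|].
    replace (al (S N) * INR (S (S N)) * t ^ S N) with (al (S N) * (INR (S (S N)) * 1 * t ^ Init.Nat.pred (S (S N)))) by (simpl; ring).
    apply is_derive_scal. apply is_derive_pow. exact (is_derive_id (K:=R_AbsRing) t).
Qed.

Definition Ds (w : C) (N : nat) (t : R) : C :=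
  sum_n (fun n => (RtoC (snd (q ^ S n)%C * t ^ n) * w ^ S n)%C) N.

Lemma bb_INR (n : nat) : bb n * INR (S n) = snd (q ^ S n)%C.
Proof. unfold bb. field. apply not_0_INR. lia. Qed.

Lemma deriv_G_fst (w : C) (N : nat) (t : R) :
  is_derive (fun t => fst (Gs w N t)) t (fst (Ds w N t)).
Proof.
  apply (is_derive_ext (fun t => sum_n (fun n => (bb n * fst (w ^ S n)%C) * t ^ S n) N)).
  { intros s. unfold Gs. rewrite fst_sum_n. apply sum_n_ext. intros n. simpl. ring. }
  unfold Ds. rewrite fst_sum_n.
  erewrite sum_n_ext; [apply deriv_poly|].
  intros n. cbv beta. rewrite <- (bb_INR n). destruct (w ^ S n)%C as [c1 c2]. simpl. ring.
Qed.

Lemma deriv_G_snd (w : C) (N : nat) (t : R) :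
  is_derive (fun t => snd (Gs w N t)) t (snd (Ds w N t)).
Proof.
  apply (is_derive_ext (fun t => sum_n (fun n => (bb n * snd (w ^ S n)%C) * t ^ S n) N)).
  { intros s. unfold Gs. rewrite snd_sum_n. apply sum_n_ext. intros n. simpl. ring. }
  unfold Ds. rewrite snd_sum_n.
  erewrite sum_n_ext; [apply deriv_poly|].
  intros n. cbv beta. rewrite <- (bb_INR n). destruct (w ^ S n)%C as [c1 c2]. simpl. ring.
Qed.

Lemma G_zero (w : C) (N : nat) : Gs w N 0 = 0%C.
Proof.
  unfold Gs. induction N.
  - rewrite sum_O. simpl. rewrite Rmult_0_l, Rmult_0_r. apply injective_projections; simpl; ring.
  - rewrite sum_Sn, IHN. simpl. rewrite Rmult_0_l, Rmult_0_r. apply injective_projections; simpl; ring.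
Qed.

Definition qc : C := Cconj q.
Definition vv (w : C) (t : R) : C := (RtoC t * w)%C.

Definition Fp (w : C) (t : R) : C :=
  (w / (2 * Ci) * (q / (1 - q * vv w t) - qc / (1 - qc * vv w t)))%C.
Definition Es (w : C) (N : nat) (t : R) : C :=
  (w / (2 * Ci) * (q * (q * vv w t) ^ S N / (1 - q * vv w t)
                 - qc * (qc * vv w t) ^ S N / (1 - qc * vv w t)))%C.

Lemma C2_nz : (RtoC 2) <> 0%C.
Proof. intros H. apply (f_equal fst) in H. simpl in H. lra. Qed.

Ltac nzC := repeat split; repeat (apply Cmult_neq_0); try exact Ci_nz; try exact C2_nz; try assumption.


Lemma q_qc : (q - qc = Ci)%C.
Proof. unfold q, qc, Ci, Cconj. apply injective_projections; simpl; field. Qed.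

Lemma q_qc_nz : (q - qc)%C <> 0%C.
Proof. rewrite q_qc. exact Ci_nz. Qed.

Lemma snd_term (k : nat) : RtoC (snd (q ^ k)%C) = ((q ^ k - qc ^ k) / (2 * Ci))%C.
Proof.
  unfold qc. rewrite <- Cpow_conj. rewrite im_alt'. unfold Im. field.
  nzC.
Qed.

Lemma D_closed (w : C) (N : nat) (t : R) :
  (1 - q * vv w t)%C <> 0%C -> (1 - qc * vv w t)%C <> 0%C ->
  Ds w N t = (Fp w t - Es w N t)%C.
Proof.
  intros H1 H2. pose proof Ci_nz. pose proof C2_nz.
  unfold Fp, Es. induction N.
  - unfold Ds. rewrite sum_O. rewrite RtoC_mult, snd_term, RtoC_pow.
    simpl. rewrite <- q_qc. field; nzC. exact q_qc_nz.
  - unfold Ds in *. rewrite sum_Sn, IHN. change plus with Cplus.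
    rewrite RtoC_mult, snd_term, RtoC_pow.
    change (q ^ S (S N))%C with (q * q ^ S N)%C.
    change (qc ^ S (S N))%C with (qc * qc ^ S N)%C.
    change (w ^ S (S N))%C with (w * w ^ S N)%C.
    change ((q * vv w t) ^ S (S N))%C with ((q * vv w t) * (q * vv w t) ^ S N)%C.
    change ((qc * vv w t) ^ S (S N))%C with ((qc * vv w t) * (qc * vv w t) ^ S N)%C.
    rewrite !Cpow_mult_l. unfold vv. rewrite !Cpow_mult_l.
    set (Q1 := (q ^ S N)%C). set (Q2 := (qc ^ S N)%C).
    set (T1 := (RtoC t ^ S N)%C). set (W1 := (w ^ S N)%C).
    field; nzC.
Qed.

Definition phiR (w1 w2 t : R) : R :=
  (atan ((1 + t * w1) / (1 + t * w2)) + atan ((1 + t * w1) / (1 - t * w2))) / 2.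
Definition phiI (w1 w2 t : R) : R :=
  (ln ((1 + t * w2) ^ 2 + (1 + t * w1) ^ 2) - ln ((1 - t * w2) ^ 2 + (1 + t * w1) ^ 2)) / 4.

Definition AA (w1 w2 t : R) : R := 1 + (1 + t * w1) ^ 2 - (t * w2) ^ 2.
Definition BB (w1 w2 t : R) : R := 2 * (1 + t * w1) * (t * w2).

Lemma AB_fact (w1 w2 t : R) :
  AA w1 w2 t ^ 2 + BB w1 w2 t ^ 2 =
  ((1 + t * w2) ^ 2 + (1 + t * w1) ^ 2) * ((1 - t * w2) ^ 2 + (1 + t * w1) ^ 2).
Proof. unfold AA, BB. ring. Qed.

Lemma deriv_phiR (w1 w2 t : R) :
  -1 < t * w2 < 1 ->
  is_derive (phiR w1 w2) t
    ((w1 * AA w1 w2 t + w2 * BB w1 w2 t) / (AA w1 w2 t ^ 2 + BB w1 w2 t ^ 2)).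
Proof.
  intros Hy. unfold phiR. auto_derive.
  - lra.
  - rewrite AB_fact. unfold AA, BB. field.
    repeat split; apply Rgt_not_eq;
      first [ lra | apply Rplus_lt_le_0_compat; [apply pow_lt; lra | apply pow2_ge_0] ].
Qed.

Lemma deriv_phiI (w1 w2 t : R) :
  -1 < t * w2 < 1 ->
  is_derive (phiI w1 w2) t
    ((w2 * AA w1 w2 t - w1 * BB w1 w2 t) / (AA w1 w2 t ^ 2 + BB w1 w2 t ^ 2)).
Proof.
  intros Hy. unfold phiI. auto_derive.
  - assert (0 < 1 + t * w2) by lra. assert (0 < 1 + - (t * w2)) by lra.
    repeat split; try exact I;
    (apply Rplus_lt_le_0_compat; [ rewrite Rmult_1_r; apply Rmult_lt_0_compat; assumption | rewrite Rmult_1_r; apply Rle_0_sqr ]).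
  - rewrite AB_fact. unfold AA, BB. field.
    repeat split; apply Rgt_not_eq;
      first [ lra | apply Rplus_lt_le_0_compat; [apply pow_lt; lra | apply pow2_ge_0] ].
Qed.


Lemma AB_pos (w1 w2 t : R) : -1 < t * w2 < 1 -> 0 < AA w1 w2 t ^ 2 + BB w1 w2 t ^ 2.
Proof.
  intros Hy. rewrite AB_fact. apply Rmult_lt_0_compat;
  (apply Rplus_lt_le_0_compat; [apply pow_lt; lra | apply pow2_ge_0]).
Qed.

Lemma K_fact (w1 w2 t : R) :
  (2 * ((1 - q * vv (w1, w2) t) * (1 - qc * vv (w1, w2) t)))%C = (AA w1 w2 t, BB w1 w2 t).
Proof.
  unfold vv, q, qc, Cconj, AA, BB. apply injective_projections; simpl; field.
Qed.

Lemma nz_qv (w1 w2 t : R) : -1 < t * w2 < 1 ->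
  (1 - q * vv (w1, w2) t)%C <> 0%C /\ (1 - qc * vv (w1, w2) t)%C <> 0%C.
Proof.
  intros Hy. pose proof (AB_pos w1 w2 t Hy) as Hp. pose proof (K_fact w1 w2 t) as K.
  split; intros H0; rewrite H0 in K;
  [rewrite Cmult_0_l, Cmult_0_r in K | rewrite Cmult_0_r, Cmult_0_r in K];
  injection K; intros Hb Ha; rewrite <- Ha, <- Hb in Hp; simpl in Hp; lra.
Qed.

Lemma Fp_eq (w1 w2 t : R) : -1 < t * w2 < 1 ->
  Fp (w1, w2) t =
  ((w1 * AA w1 w2 t + w2 * BB w1 w2 t) / (AA w1 w2 t ^ 2 + BB w1 w2 t ^ 2),
   (w2 * AA w1 w2 t - w1 * BB w1 w2 t) / (AA w1 w2 t ^ 2 + BB w1 w2 t ^ 2)).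
Proof.
  intros Hy. destruct (nz_qv w1 w2 t Hy) as [H1 H2].
  pose proof (AB_pos w1 w2 t Hy) as Hp. pose proof Ci_nz. pose proof C2_nz.
  transitivity ((w1, w2) / (2 * ((1 - q * vv (w1, w2) t) * (1 - qc * vv (w1, w2) t))))%C.
  { unfold Fp.
    replace (q / (1 - q * vv (w1, w2) t) - qc / (1 - qc * vv (w1, w2) t))%C
      with ((q - qc) / ((1 - q * vv (w1, w2) t) * (1 - qc * vv (w1, w2) t)))%C by (field; nzC).
    rewrite q_qc. field; nzC. }
  rewrite K_fact. unfold Cdiv, Cinv, Cmult. simpl.
  apply injective_projections; simpl; field; lra.
Qed.

Lemma Cmod_minus_le (x y : C) : Cmod (x - y) <= Cmod x + Cmod y.
Proof. unfold Cminus. rewrite <- (Cmod_opp y). apply Cmod_triangle. Qed.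

Lemma Cmod_one_minus (u : C) : 1 - Cmod u <= Cmod (1 - u).
Proof.
  pose proof (Cmod_triangle (1 - u) u). replace (1 - u + u)%C with (RtoC 1) in H by ring.
  rewrite Cmod_1 in H. lra.
Qed.

Lemma piece_bound (p u : C) (N : nat) :
  Cmod p = r -> Cmod u <= 1 ->
  Cmod (p * (p * u) ^ S N / (1 - p * u)) <= r ^ S (S N) / (1 - r).
Proof.
  intros Hp Hu. pose proof r_bounds as Hr.
  assert (Hpu : Cmod (p * u) <= r).
  { rewrite Cmod_mult, Hp. pose proof (Cmod_ge_0 u). nra. }
  assert (Hd : 1 - r <= Cmod (1 - p * u)).
  { pose proof (Cmod_one_minus (p * u)). lra. }
  assert (Hnz : (1 - p * u)%C <> 0%C).
  { intros H0. rewrite H0, Cmod_0 in Hd. lra. }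
  rewrite Cmod_div by exact Hnz. rewrite Cmod_mult, Cmod_pow, Hp.
  assert (H1 : Cmod (p * u) ^ S N <= r ^ S N).
  { apply pow_incr. split; [apply Cmod_ge_0 | exact Hpu]. }
  assert (H2 : 0 <= Cmod (p * u) ^ S N) by (apply pow_le, Cmod_ge_0).
  assert (H3 : 0 < r ^ S N) by (apply pow_lt; lra).
  unfold Rdiv. change (r ^ S (S N)) with (r * r ^ S N).
  apply Rmult_le_compat.
  - apply Rmult_le_pos; lra.
  - left; apply Rinv_0_lt_compat; lra.
  - apply Rmult_le_compat_l; lra.
  - apply Rinv_le_contravar; lra.
Qed.

Lemma E_bound (w : C) (N : nat) (t : R) :
  Cmod w < 1 -> 0 <= t <= 1 -> Cmod (Es w N t) <= r ^ S (S N) / (1 - r).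
Proof.
  intros Hw Ht. pose proof r_bounds as Hr.
  assert (Hv : Cmod (vv w t) <= 1).
  { unfold vv. rewrite Cmod_mult, Cmod_R, Rabs_right by lra. pose proof (Cmod_ge_0 w). nra. }
  assert (Hqc : Cmod qc = r) by (unfold qc, r; apply Cmod_conj).
  pose proof (piece_bound q (vv w t) N eq_refl Hv) as B1.
  pose proof (piece_bound qc (vv w t) N Hqc Hv) as B2.
  unfold Es. rewrite Cmod_mult.
  assert (Hw2 : Cmod (w / (2 * Ci)) <= 1 / 2).
  { rewrite Cmod_div by (apply Cmult_neq_0; [exact C2_nz | exact Ci_nz]).
    rewrite Cmod_mult, Cmod_R, Cmod_Ci, Rabs_right by lra. lra. }
  pose proof (Cmod_minus_le (q * (q * vv w t) ^ S N / (1 - q * vv w t))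
                            (qc * (qc * vv w t) ^ S N / (1 - qc * vv w t))) as B3.
  assert (0 <= r ^ S (S N) / (1 - r)).
  { apply Rmult_le_pos. apply pow_le; lra. left; apply Rinv_0_lt_compat; lra. }
  pose proof (Cmod_ge_0 (w / (2 * Ci))).
  pose proof (Cmod_ge_0 (q * (q * vv w t) ^ S N / (1 - q * vv w t) - qc * (qc * vv w t) ^ S N / (1 - qc * vv w t))).
  nra.
Qed.

Lemma mvt_bound (h dh : R -> R) (B : R) :
  (forall t, 0 <= t <= 1 -> is_derive h t (dh t)) ->
  (forall t, 0 <= t <= 1 -> Rabs (dh t) <= B) ->
  Rabs (h 1 - h 0) <= B.
Proof.
  intros Hd Hb.
  assert (Hmin : Rmin 0 1 = 0) by (apply Rmin_left; lra).
  assert (Hmax : Rmax 0 1 = 1) by (apply Rmax_right; lra).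
  destruct (MVT_gen h 0 1 dh) as [c [Hc Heq]].
  - intros x Hx. rewrite Hmin, Hmax in Hx. apply Hd. lra.
  - intros x Hx. rewrite Hmin, Hmax in Hx. apply continuity_pt_filterlim.
    apply (@ex_derive_continuous R_AbsRing R_NormedModule). eexists. apply Hd. lra.
  - rewrite Hmin, Hmax in Hc. rewrite Heq. replace (dh c * (1 - 0)) with (dh c) by ring.
    apply Hb. lra.
Qed.

Lemma w2_bound (w1 w2 t : R) : Cmod (w1, w2) < 1 -> 0 <= t <= 1 -> -1 < t * w2 < 1.
Proof.
  intros Hw Ht. pose proof (Rmax_Cmod (w1, w2)) as H. simpl in H.
  pose proof (Rmax_r (Rabs w1) (Rabs w2)).
  assert (Rabs w2 < 1) by lra.
  assert (Rabs (t * w2) < 1).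
  { rewrite Rabs_mult, (Rabs_right t) by lra. pose proof (Rabs_pos w2). nra. }
  apply Rabs_def2 in H2. lra.
Qed.

Lemma deriv_hR (w1 w2 : R) (N : nat) (t : R) : -1 < t * w2 < 1 ->
  is_derive (fun t => phiR w1 w2 t - fst (Gs (w1, w2) N t)) t (fst (Es (w1, w2) N t)).
Proof.
  intros Hy. destruct (nz_qv w1 w2 t Hy) as [H1 H2].
  pose proof (D_closed (w1, w2) N t H1 H2) as HD.
  assert (He : Es (w1, w2) N t = (Fp (w1, w2) t - Ds (w1, w2) N t)%C) by (rewrite HD; ring).
  rewrite He. rewrite (Fp_eq w1 w2 t Hy).
  apply (@is_derive_minus R_AbsRing R_NormedModule).
  - apply deriv_phiR; exact Hy.
  - apply deriv_G_fst.
Qed.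

Lemma deriv_hI (w1 w2 : R) (N : nat) (t : R) : -1 < t * w2 < 1 ->
  is_derive (fun t => phiI w1 w2 t - snd (Gs (w1, w2) N t)) t (snd (Es (w1, w2) N t)).
Proof.
  intros Hy. destruct (nz_qv w1 w2 t Hy) as [H1 H2].
  pose proof (D_closed (w1, w2) N t H1 H2) as HD.
  assert (He : Es (w1, w2) N t = (Fp (w1, w2) t - Ds (w1, w2) N t)%C) by (rewrite HD; ring).
  rewrite He. rewrite (Fp_eq w1 w2 t Hy).
  apply (@is_derive_minus R_AbsRing R_NormedModule).
  - apply deriv_phiI; exact Hy.
  - apply deriv_G_snd.
Qed.

Lemma phiR0 (w1 w2 : R) : phiR w1 w2 0 = PI / 4.
Proof.
  unfold phiR. replace ((1 + 0 * w1) / (1 + 0 * w2)) with 1 by field.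
  replace ((1 + 0 * w1) / (1 - 0 * w2)) with 1 by field. rewrite atan_1. field.
Qed.

Lemma phiI0 (w1 w2 : R) : phiI w1 w2 0 = 0.
Proof.
  unfold phiI. replace ((1 - 0 * w2) ^ 2 + (1 + 0 * w1) ^ 2) with ((1 + 0 * w2) ^ 2 + (1 + 0 * w1) ^ 2) by ring.
  field.
Qed.

Lemma bound_R (w1 w2 : R) (N : nat) : Cmod (w1, w2) < 1 ->
  Rabs (phiR w1 w2 1 - PI / 4 - fst (Gs (w1, w2) N 1)) <= r ^ S (S N) / (1 - r).
Proof.
  intros Hw.
  pose proof (mvt_bound (fun t => phiR w1 w2 t - fst (Gs (w1, w2) N t))
     (fun t => fst (Es (w1, w2) N t)) (r ^ S (S N) / (1 - r))) as H.
  cbv beta in H. rewrite phiR0, G_zero in H. simpl fst in H.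
  replace (phiR w1 w2 1 - PI / 4 - fst (Gs (w1, w2) N 1))
    with (phiR w1 w2 1 - fst (Gs (w1, w2) N 1) - (PI / 4 - 0)) by ring.
  apply H.
  - intros t Ht. apply (deriv_hR w1 w2 N t). apply (w2_bound w1); assumption.
  - intros t Ht. eapply Rle_trans; [| apply (E_bound (w1, w2) N t Hw Ht)].
    eapply Rle_trans; [| apply Rmax_Cmod]. apply Rmax_l.
Qed.

Lemma bound_I (w1 w2 : R) (N : nat) : Cmod (w1, w2) < 1 ->
  Rabs (phiI w1 w2 1 - snd (Gs (w1, w2) N 1)) <= r ^ S (S N) / (1 - r).
Proof.
  intros Hw.
  pose proof (mvt_bound (fun t => phiI w1 w2 t - snd (Gs (w1, w2) N t))
     (fun t => snd (Es (w1, w2) N t)) (r ^ S (S N) / (1 - r))) as H.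
  cbv beta in H. rewrite phiI0, G_zero in H. simpl snd in H.
  replace (phiI w1 w2 1 - snd (Gs (w1, w2) N 1))
    with (phiI w1 w2 1 - snd (Gs (w1, w2) N 1) - (0 - 0)) by ring.
  apply H.
  - intros t Ht. apply (deriv_hI w1 w2 N t). apply (w2_bound w1); assumption.
  - intros t Ht. eapply Rle_trans; [| apply (E_bound (w1, w2) N t Hw Ht)].
    eapply Rle_trans; [| apply Rmax_Cmod]. apply Rmax_r.
Qed.

Lemma ln_sqrt' (X : R) : 0 < X -> ln (sqrt X) = ln X / 2.
Proof.
  intros HX. assert (Hs : 0 < sqrt X) by (apply sqrt_lt_R0; lra).
  rewrite <- (sqrt_sqrt X) at 2 by lra. rewrite ln_mult by assumption. field.
Qed.

Lemma Clog_pos (a b : R) : 0 < a -> Clog (a, b) = (ln (a ^ 2 + b ^ 2) / 2, atan (b / a)).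
Proof.
  intros Ha. unfold Clog, Arg, Cmod. simpl fst. simpl snd.
  destruct (Rlt_dec 0 a); [|lra].
  rewrite ln_sqrt'; [reflexivity|].
  apply Rplus_lt_le_0_compat; [apply pow_lt; lra | apply pow2_ge_0].
Qed.

Lemma Carctan_eval (w1 w2 : R) : Cmod (w1, w2) < 1 ->
  Carctan (1 + (w1, w2))%C = (phiR w1 w2 1, phiI w1 w2 1).
Proof.
  intros Hw. pose proof (w2_bound w1 w2 1 Hw) as Hy.
  assert (Hy' : -1 < w2 < 1) by (rewrite Rmult_1_l in Hy; apply Hy; lra).
  unfold Carctan.
  replace (1 - Ci * (1 + (w1, w2)))%C with ((1 + w2, - (1 + w1)) : C)
    by (apply injective_projections; simpl; ring).
  replace (1 + Ci * (1 + (w1, w2)))%C with ((1 - w2, 1 + w1) : C)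
    by (apply injective_projections; simpl; ring).
  rewrite !Clog_pos by lra.
  replace (- (1 + w1) / (1 + w2)) with (- ((1 + w1) / (1 + w2))) by (field; lra).
  rewrite atan_opp.
  unfold phiR, phiI. rewrite !Rmult_1_l.
  replace ((- (1 + w1)) ^ 2) with ((1 + w1) ^ 2) by ring.
  apply injective_projections; simpl; field.
Qed.

Lemma G_bound (w1 w2 : R) (N : nat) : Cmod (w1, w2) < 1 ->
  Cmod (Gs (w1, w2) N 1 - (Carctan (1 + (w1, w2)) - RtoC (PI / 4)))%C
  <= 2 * (r ^ S (S N) / (1 - r)).
Proof.
  intros Hw. rewrite Carctan_eval by exact Hw.
  pose proof (bound_R w1 w2 N Hw) as HR. pose proof (bound_I w1 w2 N Hw) as HI.
  destruct (Gs (w1, w2) N 1) as [g1 g2]. simpl fst in HR. simpl snd in HI.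
  eapply Rle_trans; [apply Cmod_2Rmax|].
  assert (Hs : sqrt 2 <= 2).
  { rewrite <- (sqrt_square 2) at 2 by lra. apply sqrt_le_1_alt. lra. }
  simpl fst; simpl snd.
  set (B := r ^ S (S N) / (1 - r)) in *.
  assert (Hm : Rmax (Rabs (g1 + - (phiR w1 w2 1 + - (PI / 4))))
                    (Rabs (g2 + - (phiI w1 w2 1 + - 0))) <= B).
  { apply Rmax_lub.
    - rewrite Rabs_minus_sym in HR. eapply Rle_trans; [|exact HR]. right. f_equal; ring.
    - rewrite Rabs_minus_sym in HI. eapply Rle_trans; [|exact HI]. right. f_equal; ring. }
  pose proof (Rmax_l (Rabs (g1 + - (phiR w1 w2 1 + - (PI / 4))))
                    (Rabs (g2 + - (phiI w1 w2 1 + - 0)))).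
  pose proof (Rabs_pos (g1 + - (phiR w1 w2 1 + - (PI / 4)))).
  pose proof sqrt2_pos. nra.
Qed.

Theorem corollary3p1 (z : C) :
  Cmod (z - 1)%C < 1 ->
  is_series
    (fun m : nat => (RtoC ((-1) ^ (S m) * T (S m)) * (z - 1) ^ (S m))%C)
    ((Carctan z - RtoC (PI / 4)) / z)%C.
Proof.
  intros Hz. remember (z - 1)%C as w eqn:Hw.
  assert (Hzw : z = (1 + w)%C) by (rewrite Hw; ring).
  rewrite Hzw. clear Hzw Hw z.
  destruct w as [w1 w2].
  set (L := (Carctan (1 + (w1, w2)) - RtoC (PI / 4))%C).
  set (zz := (1 + (w1, w2))%C).
  pose proof r_bounds as Hr.
  assert (Hzz : 0 < Cmod zz).
  { unfold zz. replace (1 + (w1, w2))%C with (1 - (- (w1, w2)))%C by ring.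
    pose proof (Cmod_one_minus (- (w1, w2))%C). rewrite Cmod_opp in H. lra. }
  assert (Hzz0 : zz <> 0%C) by (apply Cmod_gt_0; exact Hzz).
  unfold is_series. apply filterlim_locally. intros eps.
  pose proof (cond_pos eps) as Heps.
  assert (Hy1 : 0 < eps * Cmod zz * (1 - r) / 4).
  { apply Rmult_lt_0_compat; [|lra]. apply Rmult_lt_0_compat; [|lra]. apply Rmult_lt_0_compat; lra. }
  assert (Hy2 : 0 < eps * Cmod zz * (1 - r) / 2).
  { apply Rmult_lt_0_compat; [|lra]. apply Rmult_lt_0_compat; [|lra]. apply Rmult_lt_0_compat; lra. }
  destruct (pow_lt_1_zero r ltac:(rewrite Rabs_right; lra) _ Hy1) as [N1 HN1].
  assert (Hw1 : Rabs (Cmod (w1, w2)) < 1) by (rewrite Rabs_right; [lra | apply Rle_ge, Cmod_ge_0]).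
  destruct (pow_lt_1_zero (Cmod (w1, w2)) Hw1 _ Hy2) as [N2 HN2].
  exists (max N1 N2). intros n Hn.
  apply norm_compat1.
  change (Cmod (Ps (w1, w2) n - L / zz)%C < eps).
  assert (Heq : (Ps (w1, w2) n - L / zz)%C =
     (((Gs (w1, w2) n 1 + RtoC (aa (S n)) * (w1, w2) ^ S (S n)) - L) / zz)%C).
  { rewrite <- P_rel. fold zz. field. exact Hzz0. }
  rewrite Heq.
  assert (HG := G_bound w1 w2 n Hz). fold L in HG.
  assert (HA := aa_bound (S n)).
  assert (H1 := HN1 (S (S n)) ltac:(lia)).
  assert (H2 := HN2 (S (S n)) ltac:(lia)).
  rewrite Rabs_right in H1 by (apply Rle_ge, pow_le; lra).
  rewrite Rabs_right in H2 by (apply Rle_ge, pow_le, Cmod_ge_0).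
  rewrite Cmod_div by exact Hzz0.
  apply (Rmult_lt_reg_r (Cmod zz)); [exact Hzz|].
  unfold Rdiv. rewrite Rmult_assoc, Rinv_l, Rmult_1_r by lra.
  replace (Gs (w1, w2) n 1 + RtoC (aa (S n)) * (w1, w2) ^ S (S n) - L)%C
    with ((Gs (w1, w2) n 1 - L) + RtoC (aa (S n)) * (w1, w2) ^ S (S n))%C by ring.
  eapply Rle_lt_trans; [apply Cmod_triangle|].
  rewrite Cmod_mult, Cmod_R, Cmod_pow.
  set (k := S (S n)) in *.
  set (Q := Cmod (w1, w2) ^ k) in *.
  assert (HQ : 0 <= Q) by (apply pow_le, Cmod_ge_0).
  assert (HA' : Rabs (aa (S n)) * Q <= / (1 - r) * (eps * Cmod zz * (1 - r) / 2)).
  { apply Rmult_le_compat; [apply Rabs_pos | exact HQ | | lra].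
    unfold Rdiv in HA. rewrite Rmult_1_l in HA. exact HA. }
  assert (HG' : 2 * (r ^ k / (1 - r)) < 2 * (eps * Cmod zz * (1 - r) / 4 / (1 - r))).
  { apply Rmult_lt_compat_l; [lra|]. unfold Rdiv. apply Rmult_lt_compat_r; [|exact H1].
    apply Rinv_0_lt_compat; lra. }
  replace (/ (1 - r) * (eps * Cmod zz * (1 - r) / 2)) with (eps * Cmod zz / 2) in HA' by (field; lra).
  replace (2 * (eps * Cmod zz * (1 - r) / 4 / (1 - r))) with (eps * Cmod zz / 2) in HG' by (field; lra).
  lra.
Qed.
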